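(* Let $X$ be a Banach space, $\alpha$ a left tensorial norm on $\ell_\infty\otimes X$, and let $L$ be a Banach lattice and $J\colon X\to L$ a linear isometry such that $\|\bigvee_{j=1}^k|Jy_j|\|=\alpha(\sum_{j=1}^k e_j\otimes y_j)$ for all $k$ and all $y_1,\dots,y_k\in X$. Then for all $n\in\mathbb{N}$, all $x_1,\dots,x_n\in X$ and all $h_1,\dots,h_n\in\ell_\infty$, $$\Big\|\sum_{j=1}^n h_j\otimes Jx_j\Big\|_m=\alpha\Big(\sum_{j=1}^n h_j\otimes x_j\Big).$$
   Context: All spaces are real. $(e_j)$ is the unit vector basis of $c_0\subseteq\ell_\infty$. A norm $\alpha$ on $Y\otimes X$ is left tensorial if $\alpha(y\otimes x)=\|y\|\|x\|$ and $\|T\otimes I_X\|\le\|T\|$ on $(Y\otimes X,\alpha)$ for every bounded $T\colon Y\to Y$. For a Banach space $F$, a Banach lattice $L$ and $u=\sum_{j=1}^n f_j\otimes y_j\in F\otimes L$, $\|u\|_m$ is the order bounded norm of the operator $F^*\to L$, $\varphi\mapsto\sum_j\varphi(f_j)y_j$, i.e. $\|u\|_m=\inf\{\|z\|: z\in L,\ z\ge 0,\ |\sum_j\varphi(f_j)y_j|\le\|\varphi\|z \text{ for all }\varphi\in F^*\}$; equivalently (Krivine calculus) $\|u\|_m=\|\sup_{\|\varphi\|\le1}|\sum_j\varphi(f_j)y_j|\|_L$. *)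

(* Defs.v *)
From HB Require Import structures.
From mathcomp Require Import all_boot all_order all_algebra.
From mathcomp Require Import all_classical all_reals.
From mathcomp Require Import topology normedtype.
Set Implicit Arguments. Unset Strict Implicit. Unset Printing Implicit Defensive.
Import Order.TTheory GRing.Theory Num.Theory.
Import numFieldNormedType.Exports.
Local Open Scope ring_scope.
Local Open Scope classical_set_scope.

Section Linf.
Variable R : realType.

Definition bounded_seq : {pred nat -> R} :=
  fun f => `[< exists M : R, forall n, `|f n| <= M >].

Lemma bounded_seq_closed : GRing.subsemimod_closed bounded_seq.
Proof.
split; [split|].
- apply/asboolP; exists 0 => n; by rewrite normr0.
- move=> f g /asboolP [Mf hf] /asboolP [Mg hg]; apply/asboolP; exists (Mf + Mg) => n.
  by rewrite /= (le_trans (ler_normD _ _)) // lerD.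
- move=> a f /asboolP [Mf hf]; apply/asboolP; exists (`|a| * Mf) => n.
  by rewrite /= normrM ler_wpM2l.
Qed.

HB.instance Definition _ := GRing.isSubmodClosed.Build R (nat -> R) bounded_seq
  bounded_seq_closed.

Record linf := Linf { lval : nat -> R; lvalP : lval \in bounded_seq }.

HB.instance Definition _ := [isSub for lval].
HB.instance Definition _ := [Choice of linf by <:].
HB.instance Definition _ := [SubChoice_isSubLmodule of linf by <:].

Definition linf_norm (h : linf) : R := sup (range (fun n => `|lval h n|)).

(* the unit vector e_j (index j : nat, coordinates starting at 0) *)
Lemma unit_vec_bounded (j : nat) :
  (fun n : nat => if n == j then (1 : R) else 0) \in bounded_seq.
Proof.
apply/asboolP; exists 1 => n; case: (n == j); by rewrite ?normr1 ?normr0.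
Qed.

Definition unit_vec (j : nat) : linf := Linf (unit_vec_bounded j).

End Linf.

(* Algebraic tensor products, represented by finite sums              *)
(* sum_j y_j (x) x_j, i.e. by sequences of pairs (y_j, x_j).          *)
Section Tensor.
Variable R : realType.
Variables (Y X : lmodType R).

Definition bilinear_form (B : Y -> X -> R) : Prop :=
  (forall x a y1 y2, B (a *: y1 + y2) x = a * B y1 x + B y2 x) /\
  (forall y a x1 x2, B y (a *: x1 + x2) = a * B y x1 + B y x2).

Definition tensor_eval (B : Y -> X -> R) (u : seq (Y * X)) : R :=
  \sum_(p <- u) B p.1 p.2.

(* two finite sums represent the same element of Y (x) X
   (universal property of the algebraic tensor product) *)
Definition tensor_eq (u v : seq (Y * X)) : Prop :=
  forall B, bilinear_form B -> tensor_eval B u = tensor_eval B v.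

Definition tscale (a : R) (u : seq (Y * X)) : seq (Y * X) :=
  [seq (a *: p.1, p.2) | p <- u].

Definition tensor_norm (alpha : seq (Y * X) -> R) : Prop :=
  [/\ (forall u v, tensor_eq u v -> alpha u = alpha v),
      (forall u, alpha u = 0 <-> tensor_eq u [::]),
      (forall a u, alpha (tscale a u) = `|a| * alpha u) &
      (forall u v, alpha (u ++ v) <= alpha u + alpha v)].

Definition tensor_mapl (T : Y -> Y) (u : seq (Y * X)) : seq (Y * X) :=
  [seq (T p.1, p.2) | p <- u].

Definition linear_map (T : Y -> Y) : Prop :=
  forall a y1 y2, T (a *: y1 + y2) = a *: T y1 + T y2.

(* alpha is a left tensorial norm, for the norms nY on Y and nX on X.
   ||T (x) I_X|| <= ||T|| is written out with the operator norm unfolded: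
   for every C >= 0 with ||T y|| <= C ||y|| for all y, one has
   alpha((T (x) I) u) <= C alpha(u) for all u. *)
Definition left_tensorial (nY : Y -> R) (nX : X -> R)
    (alpha : seq (Y * X) -> R) : Prop :=
  [/\ tensor_norm alpha,
      (forall y x, alpha [:: (y, x)] = nY y * nX x) &
      (forall T : Y -> Y, linear_map T -> forall C : R, 0 <= C ->
         (forall y, nY (T y) <= C * nY y) ->
         forall u, alpha (tensor_mapl T u) <= C * alpha u)].

End Tensor.

Section BanachLattice.
Variable R : realType.
Variable L : normedModType R.
Variables (le : L -> L -> Prop) (vee : L -> L -> L).

Definition labs (x : L) : L := vee x (- x).

(* Completeness is asked separately
   (L : completeNormedModType R). *)
Record is_normed_lattice : Prop := {
  le_refl : forall x, le x x;
  le_anti : forall x y, le x y -> le y x -> x = y;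
  le_trans : forall x y z, le x y -> le y z -> le x z;
  le_add : forall x y z, le x y -> le (x + z) (y + z);
  le_scale : forall (a : R) x y, 0 <= a -> le x y -> le (a *: x) (a *: y);
  vee_ub1 : forall x y, le x (vee x y);
  vee_ub2 : forall x y, le y (vee x y);
  vee_lub : forall x y z, le x z -> le y z -> le (vee x y) z;
  norm_mono : forall x y, le (labs x) (labs y) -> `|x| <= `|y|
}.

(* the order bounded norm ||u||_m of u = sum_j f_j (x) y_j in ell_infty (x) L:
   inf { ||z|| : z >= 0, |sum_j phi(f_j) y_j| <= z for all phi in the
   closed unit ball of ell_infty^* }. *)
Definition dual_ball (phi : linf R -> R) : Prop :=
  (forall a h1 h2, phi (a *: h1 + h2) = a * phi h1 + phi h2) /\
  (forall h, `|phi h| <= linf_norm h).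

Definition mnorm (u : seq (linf R * L)) : R :=
  inf [set `|z| | z in [set z : L | le 0 z /\
         forall phi, dual_ball phi ->
           le (labs (\sum_(p <- u) phi p.1 *: p.2)) z]].

End BanachLattice.

(* Main.v *)
Require Import Defs.
From HB Require Import structures.
From mathcomp Require Import all_boot all_order all_algebra.
From mathcomp Require Import all_classical all_reals.
From mathcomp Require Import topology normedtype.
From mathcomp Require Import ring lra.
Import Order.TTheory GRing.Theory Num.Theory.
Import numFieldNormedType.Exports.
Local Open Scope ring_scope.
Set Implicit Arguments. Unset Strict Implicit. Unset Printing Implicit Defensive.
Lemma lin_sum (R : realType) (V : lmodType R) (W : zmodType) (sc : R -> W -> W)
  (f : V -> W) (Hf : forall a x y, f (a *: x + y) = sc a (f x) + f y)
  (H1 : forall w, sc 1 w = w) (I : Type) (s : seq I) (c : I -> R) (g : I -> V) :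
  f (\sum_(i <- s) c i *: g i) = \sum_(i <- s) sc (c i) (f (g i)).
Proof.
have f0 : f 0 = 0.
  have := Hf 1 0 0; rewrite scaler0 addr0 H1 => E.
  by apply: (addrI (f 0)); rewrite addr0 -E.
elim: s => [|i s IH]; first by rewrite !big_nil.
by rewrite !big_cons Hf IH.
Qed.

Section Lat.
Variable R : realType.
Variable L : normedModType R.
Variables (le : L -> L -> Prop) (vee : L -> L -> L).
Hypothesis HL : is_normed_lattice le vee.
Local Notation labs := (labs vee).

Lemma leT x y z : le x y -> le y z -> le x z.
Proof. exact: (Defs.le_trans HL). Qed.
Lemma leR x : le x x. Proof. exact: (Defs.le_refl HL). Qed.

Lemma le_addl x y z : le x y -> le (z + x) (z + y).
Proof. by move=> h; rewrite ![z + _]addrC; apply: (Defs.le_add HL). Qed.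

Lemma le_add2 a b c d : le a b -> le c d -> le (a + c) (b + d).
Proof. move=> h1 h2; apply: (leT (Defs.le_add HL _ h1)); exact: le_addl. Qed.

Lemma le_neg x y : le x y -> le (- y) (- x).
Proof.
move=> h; have := Defs.le_add HL (- x - y) h.
by rewrite (addrA x (-x) (-y)) subrr add0r (addrC y) subrK.
Qed.

Lemma le_abs x : le x (labs x). Proof. exact: (vee_ub1 HL). Qed.
Lemma le_absN x : le (- x) (labs x). Proof. exact: (vee_ub2 HL). Qed.
Lemma abs_lub x z : le x z -> le (- x) z -> le (labs x) z.
Proof. exact: (vee_lub HL). Qed.

Lemma abs_ge0 x : le 0 (labs x).
Proof.
have h := le_add2 (le_abs x) (le_absN x); rewrite subrr in h.
have h2 : (0:R) <= 2^-1 by rewrite invr_ge0.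
have := Defs.le_scale HL h2 h.
have -> : labs x + labs x = (2:R) *: labs x by rewrite scaler_nat mulr2n.
rewrite scaler0 scalerA mulVf ?pnatr_eq0 // scale1r.
done.
Qed.

Lemma scale_le_r (s t : R) a : s <= t -> le 0 a -> le (s *: a) (t *: a).
Proof.
move=> st a0; have := Defs.le_scale HL (a := t - s) _ a0.
rewrite subr_ge0 => /(_ st); rewrite scaler0 => h.
have := Defs.le_add HL (s *: a) h; rewrite add0r -scalerDl subrK; done.
Qed.

Lemma scale_le_l (t : R) a b : 0 <= t -> le a b -> le (t *: a) (t *: b).
Proof. exact: (Defs.le_scale HL). Qed.

Lemma sc_le_abs (c : R) a : le (c *: a) (`|c| *: labs a).
Proof.
have [c0|c0] := leP 0 c.
  by rewrite ger0_norm //; apply: scale_le_l => //; exact: le_abs.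
rewrite ltr0_norm //.
have -> : c *: a = (- c) *: (- a) by rewrite scalerN scaleNr opprK.
apply: scale_le_l; first by rewrite oppr_ge0 ltW.
exact: le_absN.
Qed.

Lemma abs_scale (c : R) a : le (labs (c *: a)) (`|c| *: labs a).
Proof.
apply: abs_lub; first exact: sc_le_abs.
rewrite -scaleNr -(normrN c); exact: sc_le_abs.
Qed.

Lemma abs_add a b : le (labs (a + b)) (labs a + labs b).
Proof.
apply: abs_lub; first by apply: le_add2; exact: le_abs.
rewrite opprD; apply: le_add2; exact: le_absN.
Qed.

Lemma abs0 : le (labs 0) 0.
Proof. by apply: abs_lub; rewrite ?oppr0; exact: leR. Qed.

Lemma sum_le (I : Type) (s : seq I) (F G : I -> L) :
  (forall i, le (F i) (G i)) -> le (\sum_(i <- s) F i) (\sum_(i <- s) G i).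
Proof.
move=> h; elim: s => [|i s IH]; first by rewrite !big_nil; exact: leR.
rewrite !big_cons; exact: le_add2.
Qed.

Lemma abs_sum (I : Type) (s : seq I) (F : I -> L) :
  le (labs (\sum_(i <- s) F i)) (\sum_(i <- s) labs (F i)).
Proof.
elim: s => [|i s IH]; first by rewrite !big_nil; exact: abs0.
rewrite !big_cons; apply: (leT (abs_add _ _)); apply: le_addl; exact: IH.
Qed.

Lemma sum_ge0 (I : Type) (s : seq I) (F : I -> L) :
  (forall i, le 0 (F i)) -> le 0 (\sum_(i <- s) F i).
Proof.
move=> h; have := sum_le s h; rewrite big1_eq //.
Qed.

Lemma abs_pos b : le 0 b -> le (labs b) b.
Proof.
move=> b0; apply: abs_lub; first exact: leR.
apply: (leT (le_neg b0)); rewrite oppr0; exact: b0.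
Qed.

Lemma norm_abs a : `|labs a| = `|a|.
Proof.
apply/eqP; rewrite eq_le; apply/andP; split; apply: (norm_mono HL).
  exact: (abs_pos (abs_ge0 a)).
exact: le_abs.
Qed.

Lemma norm_le_pos a b : le 0 a -> le a b -> `|a| <= `|b|.
Proof.
move=> a0 ab; apply: (norm_mono HL); apply: (leT (abs_pos a0)).
exact: (leT ab (le_abs b)).
Qed.

Lemma bigvee_ge0 r (F : nat -> L) : (forall i, le 0 (F i)) ->
  le 0 (\big[vee/0]_(i < r) F i).
Proof.
move=> h; apply: (big_ind (le 0)); first exact: leR.
  by move=> x y hx _; apply: (leT hx); exact: (vee_ub1 HL).
by move=> i _; exact: h.
Qed.

Lemma bigvee_lub r (F : nat -> L) z : le 0 z -> (forall i, (i < r)%N -> le (F i) z) ->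
  le (\big[vee/0]_(i < r) F i) z.
Proof.
move=> z0 h; apply: (big_ind (le^~ z)) => //.
  by move=> x y; exact: (vee_lub HL).
by move=> i _; exact: h.
Qed.

Lemma bigvee_ub_seq (I : eqType) (s : seq I) (G : I -> L) i : i \in s ->
  le (G i) (\big[vee/0]_(k <- s) G k).
Proof.
elim: s => [//|k s IH]; rewrite inE big_cons => /orP [/eqP ->|/IH h].
  exact: (vee_ub1 HL).
apply: (leT h); exact: (vee_ub2 HL).
Qed.

Lemma bigvee_ub r (F : nat -> L) i : (i < r)%N -> le (F i) (\big[vee/0]_(k < r) F k).
Proof.
move=> ir; exact: (bigvee_ub_seq (fun k : 'I_r => F k) (mem_index_enum (Ordinal ir))).
Qed.

End Lat.

Section LinfL.
Variable R : realType.

Lemma linf_bnd (g : linf R) : exists M, forall n, `|lval g n| <= M.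
Proof. by have := lvalP g; rewrite inE. Qed.

Lemma linf_ub (g : linf R) m : `|lval g m| <= linf_norm g.
Proof.
rewrite /linf_norm; have [M hM] := linf_bnd g; apply: ub_le_sup; last by exists m.
by exists M => _ [n _ <-]; exact: hM.
Qed.

Lemma linf_le (g : linf R) c : (forall m, `|lval g m| <= c) -> linf_norm g <= c.
Proof.
move=> h; apply: ge_sup; first by exists `|lval g 0|, 0.
by move=> _ [n _ <-]; exact: h.
Qed.

Lemma mkl_proof (f : nat -> R) (M : R) (H : forall m, `|f m| <= M) : f \in bounded_seq (R:=R).
Proof. by rewrite inE; exists M. Qed.

Definition mkl (f : nat -> R) (M : R) (H : forall m, `|f m| <= M) : linf R :=
  Linf (mkl_proof H).

Lemma linf_ext (g1 g2 : linf R) : (forall m, lval g1 m = lval g2 m) -> g1 = g2.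
Proof. by move=> h; apply: val_inj; apply: funext. Qed.

Lemma unit_sum (r : nat) (c : nat -> R) m :
  lval (\sum_(i <- enum 'I_r) c i *: unit_vec R i) m = (m < r)%:R * c m.
Proof.
rewrite (@lin_sum R _ R (fun a b => a * b) (fun g : linf R => lval g m)) //; last first.
  by move=> w; rewrite mul1r.
rewrite -(big_map val xpredT (fun i => c i * lval (unit_vec R i) m)) val_enum_ord /=.
have [mr|rm] := ltnP m r.
  rewrite (bigD1_seq m) ?iota_uniq ?mem_iota //= big1_seq ?addr0 /=.
    by rewrite eqxx mulr1 mul1r.
  by move=> i /andP [/negbTE ne _]; rewrite eq_sym ne mulr0.
rewrite mul0r big1_seq // => i /andP [_]; rewrite mem_iota add0n => ir.
have : m != i by rewrite neq_ltn (leq_trans ir rm) orbT.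
by move/negbTE=> ->; rewrite mulr0.
Qed.

Lemma db_add (phi : linf R -> R) : dual_ball phi -> forall g1 g2, phi (g1 + g2) = phi g1 + phi g2.
Proof. by move=> [h _] g1 g2; rewrite -{1}(scale1r g1) h mul1r. Qed.

Lemma db_sub (phi : linf R -> R) : dual_ball phi -> forall g1 g2, phi (g1 - g2) = phi g1 - phi g2.
Proof.
move=> [h _] g1 g2; rewrite addrC -scaleN1r h mulN1r addrC //.
Qed.

Lemma db_sum (phi : linf R -> R) : dual_ball phi -> forall (I : Type) (s : seq I) c g,
  phi (\sum_(i <- s) c i *: g i) = \sum_(i <- s) c i * phi (g i).
Proof.
move=> [h _] I s c g; apply: (@lin_sum R _ R (fun a b => a * b)) => //.
by move=> w; rewrite mul1r.
Qed.

Lemma db_norm (phi : linf R -> R) : dual_ball phi -> forall g, `|phi g| <= linf_norm g.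
Proof. by case. Qed.

Lemma ev_db m : dual_ball (fun g : linf R => lval g m).
Proof. by split=> // g; exact: linf_ub. Qed.

End LinfL.

Section Tens.
Variable R : realType.
Variables (Y X : lmodType R).
Variables (nY : Y -> R) (nX : X -> R) (alpha : seq (Y * X) -> R).
Hypothesis Ha : left_tensorial nY nX alpha.

Lemma alpha_eq u v : tensor_eq u v -> alpha u = alpha v.
Proof. by case: Ha => [[h _ _ _] _ _]; exact: h. Qed.

Lemma alpha_cat u v : alpha (u ++ v) <= alpha u + alpha v.
Proof. by case: Ha => [[_ _ _ h] _ _]; exact: h. Qed.

Lemma alpha_nil : alpha [::] = 0.
Proof. by case: Ha => [[_ h _ _] _ _]; apply/h. Qed.

Lemma alpha1 y x : alpha [:: (y, x)] = nY y * nX x.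
Proof. by case: Ha => [_ h _]; exact: h. Qed.

Lemma alpha_map (T : Y -> Y) : linear_map T -> forall C, 0 <= C ->
  (forall y, nY (T y) <= C * nY y) -> forall u, alpha (tensor_mapl T u) <= C * alpha u.
Proof. by case: Ha => [_ _ h]; exact: h. Qed.

Lemma alpha_bound (s : seq (Y * X)) : alpha s <= \sum_(p <- s) nY p.1 * nX p.2.
Proof.
elim: s => [|[y x] s IH]; first by rewrite alpha_nil big_nil.
rewrite big_cons -cat1s; apply: (le_trans (alpha_cat _ _)).
by rewrite alpha1 lerD2l.
Qed.

End Tens.

Section TEq.
Variable R : realType.
Variables (Y X : lmodType R).

Lemma bilL (B : Y -> X -> R) : bilinear_form B -> forall (I : Type) (s : seq I) c g x,
  B (\sum_(i <- s) c i *: g i) x = \sum_(i <- s) c i * B (g i) x.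
Proof.
move=> [h _] I s c g x; apply: (@lin_sum R _ R (fun a b => a * b) (fun y => B y x)) => //.
by move=> w; rewrite mul1r.
Qed.

Lemma bilR (B : Y -> X -> R) : bilinear_form B -> forall (I : Type) (s : seq I) c g y,
  B y (\sum_(i <- s) c i *: g i) = \sum_(i <- s) c i * B y (g i).
Proof.
move=> [_ h] I s c g y; apply: (@lin_sum R _ R (fun a b => a * b) (fun x => B y x)) => //.
by move=> w; rewrite mul1r.
Qed.

Lemma bil_sub (B : Y -> X -> R) : bilinear_form B -> forall y1 y2 x,
  B (y1 - y2) x = B y1 x - B y2 x.
Proof.
move=> [h _] y1 y2 x; rewrite addrC -scaleN1r h mulN1r addrC //.
Qed.

Lemma teq_split (I : Type) (s : seq I) (a b : I -> Y) (x : I -> X) :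
  tensor_eq [seq (a i, x i) | i <- s]
    ([seq (b i, x i) | i <- s] ++ [seq (a i - b i, x i) | i <- s]).
Proof.
move=> B hB; rewrite /tensor_eval big_cat !big_map /= -big_split /=.
by apply: eq_bigr => i _; rewrite bil_sub // addrC subrK.
Qed.

Lemma teq_exch (I J : Type) (sI : seq I) (sJ : seq J) (c : J -> I -> R)
  (e : I -> Y) (x : J -> X) :
  tensor_eq [seq (e i, \sum_(j <- sJ) c j i *: x j) | i <- sI]
            [seq (\sum_(i <- sI) c j i *: e i, x j) | j <- sJ].
Proof.
move=> B hB; rewrite /tensor_eval !big_map /=.
under eq_bigr => i _ do rewrite bilR //.
under [RHS]eq_bigr => j _ do rewrite bilL //.
exact: exchange_big.
Qed.

End TEq.
Lemma partition_ex (R : realType) (n : nat) (h : 'I_n -> nat -> R) (M d : R) :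
  0 < d -> (forall j m, `|h j m| <= M) ->
  exists rho : nat -> nat, exists P : seq nat,
    [/\ uniq P, (forall m, rho m \in P), (forall p, p \in P -> rho p = p) &
        (forall j m, `|h j m - h j (rho m)| <= d)].
Proof.
move=> d0 hM.
pose N := Num.truncn (2 * M / d).
pose t j m := Num.truncn ((h j m + M) / d).
have tN : forall j m, (t j m <= N)%N.
  move=> j m; apply: le_truncn; rewrite ler_pM2r ?invr_gt0 //.
  have := hM j m; rewrite ler_norml => /andP [h1 h2]; lra.
pose key m : {ffun 'I_n -> 'I_N.+1} := [ffun j => inord (t j m)].
pose rep k := get [set m | key m = k].
pose rho m := rep (key m).
have keyrho : forall m, key (rho m) = key m.
  by move=> m; apply: (@getPex _ [set m' | key m' = key m]); exists m.
have rhorho : forall m, rho (rho m) = rho m by move=> m; rewrite /rho keyrho.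
exists rho, (undup [seq rho (rep k) | k <- enum {ffun 'I_n -> 'I_N.+1}]).
split.
- exact: undup_uniq.
- move=> m; rewrite mem_undup; apply/mapP; exists (key m); first by rewrite mem_enum.
  by rewrite /rho -/(rho m) keyrho.
- move=> p; rewrite mem_undup => /mapP [k _ ->]; exact: rhorho.
- move=> j m.
  have ht : t j (rho m) = t j m.
    have := congr1 (fun f : {ffun 'I_n -> 'I_N.+1} => val (f j)) (keyrho m).
    by rewrite /= !ffunE !inordK // ltnS tN.
  have hm1 := hM j m; have hm2 := hM j (rho m).
  move: hm1 hm2; rewrite !ler_norml => /andP [a1 a2] /andP [b1 b2].
  have i1 : 0 <= (h j m + M) / d by rewrite divr_ge0 //; lra.
  have i2 : 0 <= (h j (rho m) + M) / d by rewrite divr_ge0 //; lra.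
  have := truncn_itv i1; have := truncn_itv i2.
  rewrite -/(t j m) -/(t j (rho m)) ht.
  move=> /andP [c1 c2] /andP [e1 e2].
  have E : h j m - h j (rho m) = d * ((h j m + M) / d - (h j (rho m) + M) / d).
    by field; rewrite gt_eqF.
  rewrite E.
  rewrite -natr1 in c2 e2.
  move: c1 c2 e1 e2; set a := (h j m + M) / d; set b := (h j (rho m) + M) / d.
  move=> c1 c2 e1 e2.
  have ab1 : a - b <= 1 by lra.
  have ab2 : -1 <= a - b by lra.
  apply/andP; split; nra.
Qed.

Section Main.
Local Open Scope classical_set_scope.
Variable R : realType.
Variable X : completeNormedModType R.
Variable alpha : seq (linf R * X) -> R.
Hypothesis Halpha : left_tensorial (@linf_norm R) (fun x : X => `|x|) alpha.
Variable L : completeNormedModType R.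
Variables (le : L -> L -> Prop) (vee : L -> L -> L).
Hypothesis HL : is_normed_lattice le vee.
Variable J : X -> L.
Hypothesis HJlin : forall (a : R) (x1 x2 : X), J (a *: x1 + x2) = a *: J x1 + J x2.
Hypothesis HJiso : forall x : X, `|J x| = `|x|.
Hypothesis HJ : forall (k : nat) (y : 'I_k -> X),
     `| \big[vee/0]_(j < k) labs vee (J (y j)) |
       = alpha [seq (unit_vec R (nat_of_ord j), y j) | j <- enum 'I_k].
Variable n : nat.
Variable x : 'I_n -> X.
Variable h : 'I_n -> linf R.

Local Notation labs := (labs vee).
Let hv j m := lval (h j) m.
Let cx := \sum_(j <- enum 'I_n) `|x j|.
Let u := [seq (h j, x j) | j <- enum 'I_n].
Let Zset := [set z : L | le 0 z /\ forall phi, dual_ball phi ->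
           le (labs (\sum_(p <- [seq (h j, J (x j)) | j <- enum 'I_n]) phi p.1 *: p.2)) z].

Lemma Jsum (I : Type) (s : seq I) (c : I -> R) (g : I -> X) :
  J (\sum_(i <- s) c i *: g i) = \sum_(i <- s) c i *: J (g i).
Proof. by apply: (@lin_sum R X L (fun a b => a *: b)) => // w; rewrite scale1r. Qed.

Lemma cx_ge0 : 0 <= cx.
Proof. by apply: sumr_ge0 => j _. Qed.

Lemma hv_bound : exists M, forall j m, `|hv j m| <= M.
Proof.
exists (\sum_(j <- enum 'I_n) linf_norm (h j)) => j m.
apply: (le_trans (linf_ub _ m)).
rewrite (bigD1_seq j) ?mem_enum ?enum_uniq //= lerDl.
apply: sumr_ge0 => k _; exact: (le_trans (normr_ge0 _) (linf_ub _ 0)).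
Qed.

Lemma core (d : R) : 0 < d ->
  (forall z, Zset z -> alpha u <= `|z| + d * cx) /\
  (exists2 z, Zset z & `|z| <= alpha u + d * cx + d * cx).
Proof.
move=> d0.
have [M hM] := hv_bound.
have [rho [P [Pu rhoP Prho rhod]]] := partition_ex d0 hM.
pose r := size P.
pose idx m := index (rho m) P.
have idxr : forall m, (idx m < r)%N by move=> m; rewrite index_mem.
have Sb : forall (g : linf R) m, `|lval g (idx m)| <= linf_norm g by move=> g m; exact: linf_ub.
pose S (g : linf R) := mkl (Sb g).
have Tb : forall (g : linf R) i, `|(i < r)%:R * lval g (nth 0%N P i)| <= linf_norm g.
  move=> g i; rewrite normrM; case: (i < r)%N; rewrite ?normr1 ?mul1r ?normr0 ?mul0r.
    exact: linf_ub.
  exact: (le_trans (normr_ge0 _) (linf_ub g 0)).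
pose T (g : linf R) := mkl (Tb g).
pose c j i := hv j (nth 0%N P i).
pose w j := \sum_(i <- enum 'I_r) c j i *: unit_vec R i.
pose y i := \sum_(j <- enum 'I_n) c j i *: x j.
pose v := [seq (unit_vec R (nat_of_ord i), y i) | i <- enum 'I_r].
pose ws := [seq (w j, x j) | j <- enum 'I_n].
pose V := \big[vee/0]_(i < r) labs (J (y i)).
have hV : `|V| = alpha v := HJ (fun i : 'I_r => y i).
have hA : alpha v = alpha ws.
  apply: (alpha_eq Halpha).
  exact: (teq_exch (enum 'I_r) (enum 'I_n) (fun j (i : 'I_r) => c j i)
            (fun i : 'I_r => unit_vec R i) x).
have hSw : forall j m, lval (S (w j)) m = hv j (rho m).
  move=> j m; rewrite /= unit_sum idxr mul1r /c nth_index //.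
have hTS : forall j, T (S (w j)) = w j.
  move=> j; apply: linf_ext => i.
  have -> : lval (T (S (w j))) i = (i < r)%:R * lval (S (w j)) (nth 0%N P i) by [].
  rewrite hSw unit_sum.
  case ir: (i < r)%N; rewrite ?mul0r ?mul1r //.
  by rewrite /c Prho // mem_nth.
have Slin : linear_map S by move=> a g1 g2; apply: linf_ext => m.
have Snorm : forall g, linf_norm (S g) <= 1 * linf_norm g.
  by move=> g; rewrite mul1r; apply: linf_le => m; exact: Sb.
have Tlin : linear_map T.
  move=> a g1 g2; apply: linf_ext => m /=.
  by rewrite mulrDr mulrCA.
have Tnorm : forall g, linf_norm (T g) <= 1 * linf_norm g.
  by move=> g; rewrite mul1r; apply: linf_le => m; exact: Tb.
pose ut := [seq (S (w j), x j) | j <- enum 'I_n].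
have hut : alpha ut <= alpha ws.
  have := alpha_map Halpha Slin ler01 Snorm ws.
  by rewrite mul1r /tensor_mapl -map_comp.
have hws : alpha ws <= alpha ut.
  have := alpha_map Halpha Tlin ler01 Tnorm ut.
  rewrite mul1r /tensor_mapl -map_comp.
  congr (alpha _ <= _); apply: eq_map => j /=; by rewrite hTS.
have hdb : forall (a b : 'I_n -> linf R), (forall j, linf_norm (a j - b j) <= d) ->
    alpha [seq (a j - b j, x j) | j <- enum 'I_n] <= d * cx.
  move=> a b hab; apply: (le_trans (alpha_bound Halpha _)).
  rewrite big_map /cx mulr_sumr; apply: ler_sum => j _ /=.
  by apply: ler_wpM2r => //.
have hd1 : forall j, linf_norm (h j - S (w j)) <= d.
  move=> j; apply: linf_le => m.
  have -> : lval (h j - S (w j)) m = hv j m - lval (S (w j)) m by [].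
  rewrite hSw; exact: rhod.
have hd2 : forall j, linf_norm (S (w j) - h j) <= d.
  move=> j; apply: linf_le => m.
  have -> : lval (S (w j) - h j) m = lval (S (w j)) m - hv j m by [].
  rewrite hSw distrC; exact: rhod.
have hu1 : alpha u <= alpha ut + d * cx.
  rewrite (alpha_eq Halpha (teq_split (enum 'I_n) h (fun j => S (w j)) x)).
  apply: (le_trans (alpha_cat Halpha _ _)); rewrite lerD2l; exact: hdb.
have hu2 : alpha ut <= alpha u + d * cx.
  rewrite (alpha_eq Halpha (teq_split (enum 'I_n) (fun j => S (w j)) h x)).
  apply: (le_trans (alpha_cat Halpha _ _)); rewrite lerD2l; exact: hdb.
have V0 : le 0 V by apply: (@bigvee_ge0 _ _ _ _ HL r (fun k => labs (J (y k)))) => i; exact: (abs_ge0 HL).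
split.
- move=> z [z0 hz].
  have hVz : le V z.
    apply: (@bigvee_lub _ _ _ _ HL r (fun k => labs (J (y k)))) => // i ir.
    have := hz _ (@ev_db R (nth 0%N P i)); rewrite big_map /=.
    suff -> : \sum_(j <- enum 'I_n) lval (h j) (nth 0%N P i) *: J (x j) = J (y i) by [].
    by rewrite /y Jsum.
  have := norm_le_pos HL V0 hVz.
  rewrite hV hA => h1.
  apply: (le_trans hu1); rewrite lerD2r; apply: (le_trans hut); exact: h1.
- pose W := d *: \sum_(j <- enum 'I_n) labs (J (x j)).
  have W0 : le 0 W.
    have := scale_le_l HL (ltW d0) (sum_ge0 HL (enum 'I_n) (fun j => abs_ge0 HL (J (x j)))).
    by rewrite scaler0.
  exists (V + W).
    split.
      have := le_add2 HL V0 W0; by rewrite addr0.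
    move=> phi hphi; rewrite big_map /=.
    pose psi g := phi (S g).
    have hpsi : dual_ball psi.
      split.
        by move=> a g1 g2; rewrite /psi Slin; case: hphi => hl _; rewrite hl.
      move=> g; apply: (le_trans (db_norm hphi _)); have := Snorm g; by rewrite mul1r.
    pose cn (i : nat) := psi (unit_vec R i).
    have dec : \sum_(j <- enum 'I_n) phi (h j) *: J (x j) =
        \sum_(i <- enum 'I_r) cn i *: J (y i) +
        \sum_(j <- enum 'I_n) phi (h j - S (w j)) *: J (x j).
      have e1 : forall j, phi (h j) = psi (w j) + phi (h j - S (w j)).
        by move=> j; rewrite (db_sub hphi) /psi addrC subrK.
      under eq_bigr => j _ do rewrite e1 scalerDl.
      rewrite big_split /=; congr (_ + _).
      under eq_bigr => j _ do rewrite (db_sum hpsi) scaler_suml.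
      rewrite exchange_big /=; apply: eq_bigr => i _.
      rewrite /y Jsum scaler_sumr; apply: eq_bigr => j _.
      by rewrite scalerA mulrC.
    rewrite dec; apply: (leT HL (abs_add HL _ _)); apply: (le_add2 HL).
    + apply: (leT HL (abs_sum HL _ _)).
      apply: (leT HL (sum_le HL (enum 'I_r) (fun i : 'I_r => abs_scale HL (cn i) (J (y i))))).
      have hc : \sum_(i <- enum 'I_r) `|cn i| <= 1.
        have -> : \sum_(i <- enum 'I_r) `|cn i| =
            psi (\sum_(i <- enum 'I_r) Num.sg (cn i) *: unit_vec R i).
          rewrite (db_sum hpsi); apply: eq_bigr => i _; by rewrite normrEsg.
        apply: (le_trans (ler_norm _)); apply: (le_trans (db_norm hpsi _)).
        apply: linf_le => m; rewrite (unit_sum r (fun k => Num.sg (cn k))) normrM.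
        case: (m < r)%N; rewrite ?normr1 ?normr0 ?mul1r ?mul0r //.
        rewrite normr_sg; by case: (_ != 0).
      apply: (leT HL (sum_le HL (enum 'I_r) (fun i : 'I_r => scale_le_l HL (normr_ge0 (cn i))
                 (bigvee_ub HL (fun k => labs (J (y k))) (ltn_ord i))))).
      rewrite -scaler_suml -[X in le _ X](scale1r V); exact: (scale_le_r HL hc V0).
    + apply: (leT HL (abs_sum HL _ _)).
      apply: (leT HL (sum_le HL (enum 'I_n) (fun j : 'I_n => abs_scale HL (phi (h j - S (w j))) (J (x j))))).
      rewrite /W scaler_sumr; apply: (sum_le HL) => j.
      apply: (scale_le_r HL); last exact: (abs_ge0 HL).
      apply: (le_trans (db_norm hphi _)); exact: hd1.
  apply: (le_trans (ler_normD _ _)).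
  have hW : `|W| <= d * cx.
    rewrite /W normrZ gtr0_norm //; apply: ler_wpM2l; first exact: ltW.
    apply: le_trans; first exact: ler_norm_sum. rewrite /cx.
    apply: ler_sum => j _; by rewrite (norm_abs HL) HJiso.
  rewrite -addrA [d * cx + _]addrC addrA lerD //.
  rewrite hV hA; apply: (le_trans hws); exact: hu2.
Qed.

End Main.

Unset Implicit Arguments.
Set Strict Implicit.

Theorem corollary1p8 (R : realType) (X : completeNormedModType R)
  (alpha : seq (linf R * X) -> R)
  (Halpha : left_tensorial (@linf_norm R) (fun x : X => `|x|) alpha)
  (L : completeNormedModType R) (le : L -> L -> Prop) (vee : L -> L -> L)
  (HL : is_normed_lattice le vee)
  (J : X -> L)
  (HJlin : forall (a : R) (x1 x2 : X), J (a *: x1 + x2) = a *: J x1 + J x2)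
  (HJiso : forall x : X, `|J x| = `|x|)
  (HJ : forall (k : nat) (y : 'I_k -> X),
     `| \big[vee/0]_(j < k) labs vee (J (y j)) |
       = alpha [seq (unit_vec R (nat_of_ord j), y j) | j <- enum 'I_k]) :
  forall (n : nat) (x : 'I_n -> X) (h : 'I_n -> linf R),
    mnorm le vee [seq (h j, J (x j)) | j <- enum 'I_n]
      = alpha [seq (h j, x j) | j <- enum 'I_n].
Proof.
move=> n x h.
have C := core Halpha HL HJlin HJiso HJ x h.
set cx := \sum_(j <- enum 'I_n) `|x j| in C *.
have cx0 : 0 <= cx by apply: sumr_ge0.
have dpos : forall e : R, 0 < e -> 0 < e / (2 * (cx + 1)).
  move=> e e0; apply: divr_gt0 => //; apply: mulr_gt0 => //; lra.
have dle : forall e : R, 0 < e -> e / (2 * (cx + 1)) * cx + e / (2 * (cx + 1)) * cx <= e.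
  move=> e e0; set d := e / (2 * (cx + 1)).
  have hd : d * (cx + 1) * 2 = e by rewrite /d; field; lra.
  have d0 : 0 < d by exact: dpos.
  have : d * cx <= d * (cx + 1) by apply: ler_wpM2l; [exact: ltW | lra].
  move: hd; set t := d * (cx + 1); lra.
rewrite /mnorm; set E := [set `|z| | z in _]%classic.
have hlb : has_lbound E by exists 0 => _ [z _ <-].
apply/eqP; rewrite eq_le; apply/andP; split.
- apply/ler_addgt0Pr => e e0.
  have [_ [Z hZ hZle]] := C _ (dpos e e0).
  apply: (le_trans (ge_inf hlb (ex_intro2 _ _ Z hZ erefl))).
  apply: (le_trans hZle); have := dle e e0; lra.
- apply: lb_le_inf.
    have [_ [Z hZ _]] := C _ (@ltr01 R); by exists `|Z|, Z.
  move=> _ [z hz <-]; apply/ler_addgt0Pr => e e0.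
  have [hz1 _] := C _ (dpos e e0).
  apply: (le_trans (hz1 z hz)).
  have := dle e e0; have : 0 <= e / (2 * (cx + 1)) * cx by apply: mulr_ge0 => //; exact: ltW (dpos e e0).
  lra.
Qed.
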